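(* For every integer $n>1$, $$\delta_C(n,0) \geqslant \frac{4 - 2\sin(\pi/n)}{2\sin(\pi/n)} \geqslant \frac{2n}{\pi} - 1.$$
   Context: For a graph $G$ whose vertices are points in $\mathbb{R}^D$, each edge $(u,v)$ has weight equal to the Euclidean distance $d(u,v)$, and $d_G(u,v)$ is the length of a shortest path in $G$ between $u$ and $v$. The dilation of $G$ is $\Delta(G)=\max_{u\neq v\in V(G)} d_G(u,v)/d(u,v)$ (infinite if $G$ is disconnected). For a finite set $S$ of $n$ points and an integer $k\ge 0$, $\Delta(S,k)$ is the minimum of $\Delta(G)$ over all graphs $G$ with vertex set exactly $S$ and exactly $n-1+k$ edges. $\delta_C(n,k)$ is the supremum of $\Delta(S,k)$ over all sets $S$ of $n$ points in $\mathbb{R}^2$ in convex position (all points lie on the boundary of their convex hull). *)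

(* Defs.v *)
From HB Require Import structures.
From mathcomp Require Import all_boot all_order all_algebra.
From mathcomp Require Import all_classical all_reals all_analysis.
Set Implicit Arguments. Unset Strict Implicit. Unset Printing Implicit Defensive.
Import Order.TTheory GRing.Theory Num.Theory.
Local Open Scope classical_set_scope.
Local Open Scope ring_scope.

Section GeomGraph.
Variable R : realType.

Definition pt := (R * R)%type.

Definition edist (a b : pt) : R :=
  Num.sqrt ((a.1 - b.1) ^+ 2 + (a.2 - b.2) ^+ 2).

Variable n : nat.

Definition in_hull (p : 'I_n -> pt) (q : pt) : Prop :=
  exists lam : 'I_n -> R,
    (forall j, 0 <= lam j) /\ \sum_j lam j = 1 /\
    q = (\sum_j lam j * (p j).1, \sum_j lam j * (p j).2).

(* every point lies on the boundary of the convex hull, i.e. is not an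
   interior point of the (closed) convex hull *)
Definition convex_position (p : 'I_n -> pt) : Prop :=
  forall i, ~ exists e : R, 0 < e /\
    forall q : pt, edist q (p i) < e -> in_hull p q.

Definition is_graph (E : {set {set 'I_n}}) : Prop :=
  forall e, e \in E -> #|e| = 2%N.

Definition adj (E : {set {set 'I_n}}) (a b : 'I_n) : bool := (finset.setU (finset.set1 a) (finset.set1 b)) \in E.

Fixpoint walk_len (p : 'I_n -> pt) (a : 'I_n) (s : seq 'I_n) : R :=
  match s with
  | [::] => 0
  | b :: t => edist (p a) (p b) + walk_len p b t
  end.

(* shortest-path distance d_G(u,v) (+oo if no path) *)
Definition dG (p : 'I_n -> pt) (E : {set {set 'I_n}}) (u v : 'I_n) : \bar R :=
  ereal_inf [set (walk_len p u s)%:E |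
               s in [set s : seq 'I_n | path (adj E) u s /\ last u s = v]].

Definition dilation (p : 'I_n -> pt) (E : {set {set 'I_n}}) : \bar R :=
  ereal_sup [set (dG p E uv.1 uv.2 * ((edist (p uv.1) (p uv.2))^-1)%:E)%E |
               uv in [set uv : 'I_n * 'I_n | uv.1 != uv.2]].

Definition Delta (p : 'I_n -> pt) (k : nat) : \bar R :=
  ereal_inf [set dilation p E |
    E in [set E : {set {set 'I_n}} | is_graph E /\ #|E| = (n - 1 + k)%N]].

Definition deltaC (k : nat) : \bar R :=
  ereal_sup [set Delta p k |
    p in [set p : 'I_n -> pt | injective p /\ convex_position p]].

End GeomGraph.

(* Main.v *)
From Pilot Require Import Defs.
From mathcomp Require Import all_boot all_order all_algebra.
From mathcomp Require Import all_classical all_reals all_analysis.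
From HB Require Import structures.
From mathcomp Require Import all_boot all_order all_algebra.
From mathcomp Require Import all_classical all_reals all_analysis.
From mathcomp Require Import zify ring lra.
Set Implicit Arguments. Unset Strict Implicit. Unset Printing Implicit Defensive.
Import Order.TTheory GRing.Theory Num.Theory.
Import numFieldNormedType.Exports.

Local Open Scope ring_scope.

Local Notation ed := Pilot.Defs.edist.

Section Tree.
Variable T : finType.

Definition erel (F : {set {set T}}) : rel T := fun a b => [set a; b] \in F.

Lemma set2_eq (a b c d : T) : c != d -> [set a; b] = [set c; d] ->
  (a = c /\ b = d) \/ (a = d /\ b = c).
Proof.
move=> cd E.
have ha : a \in [set c; d] by rewrite -E !inE eqxx.
have hb : b \in [set c; d] by rewrite -E !inE eqxx orbT.
have hc : c \in [set a; b] by rewrite E !inE eqxx.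
have hd : d \in [set a; b] by rewrite E !inE eqxx orbT.
move: ha hb hc hd; rewrite !inE => /orP[]/eqP-> /orP[]/eqP-> /orP[]/eqP h1 /orP[]/eqP h2;
  subst; rewrite ?eqxx in cd; by auto.
Qed.

Lemma sum_deg (S : {set T}) (F : {set {set T}}) :
  (forall e, e \in F -> #|e| = 2%N /\ e \subset S) ->
  (\sum_(v in S) #|[set e in F | v \in e]| = 2 * #|F|)%N.
Proof.
move=> HF.
transitivity (\sum_(v in S) \sum_(e in F) (v \in e : nat))%N.
  apply: eq_bigr => v _; rewrite -sum1_card big_mkcond [RHS]big_mkcond /=.
  apply: eq_bigr => e _; rewrite !inE; by case: (e \in F); case: (v \in e).
rewrite exchange_big /= mulnC -sum_nat_const; apply: eq_bigr => e eF.
have [h2 hS] := HF e eF.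
rewrite -h2 -sum1_card big_mkcond /= [in RHS]big_mkcond /=.
apply: eq_bigr => v _; case ve: (v \in e) => /=; last by case: (v \in S).
by rewrite (fintype.subsetP hS v ve) /=; case: (v \in S).
Qed.

Lemma tree_potential (d : T -> T -> int) (antisym : forall a b, d b a = - d a b) :
  forall k (S : {set T}) (F : {set {set T}}), #|S| = k.+1 -> #|F| = k ->
  (forall e, e \in F -> #|e| = 2%N /\ e \subset S) ->
  (forall x y, x \in S -> y \in S -> connect (erel F) x y) ->
  exists phi : T -> int, forall a b, [set a; b] \in F -> phi b = phi a + d a b.
Proof.
elim=> [|k IH] S F hS hF HF Hc.
  exists (fun _ => 0) => a b; by rewrite (cards0_eq hF) inE.
(* find a leaf *)
have deg1 : forall v, v \in S -> (1 <= #|[set e in F | v \in e]|)%N.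
  move=> v vS.
  have : (0 < #|S :\ v|)%N by move: hS; rewrite (cardsD1 v S) vS add1n => -[->].
  case/card_gt0P => w; rewrite !inE => /andP[wv wS].
  have /connectP[p pp lp] := Hc v w vS wS.
  case: p pp lp => [|a p] /= pp lp; first by rewrite lp eqxx in wv.
  move/andP: pp => [va _].
  apply/card_gt0P; exists [set v; a]; rewrite !inE eqxx andbT; exact: va.
have [v vS dv] : exists2 v, v \in S & #|[set e in F | v \in e]| = 1%N.
  suff /exists_inP[v vS /eqP dv] : [exists v in S, #|[set e in F | v \in e]| == 1%N].
    by exists v.
  apply: contraT => /exists_inPn H.
  have : (\sum_(v in S) 2 <= \sum_(v in S) #|[set e in F | v \in e]|)%N.
    apply: leq_sum => v vS; have := deg1 v vS; have := H v vS.
    by case: #|_| => [|[|m]].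
  rewrite sum_deg // sum_nat_const hS hF. lia.
have /eqP/cards1P[e0 He0] := dv.
have e0in : e0 \in [set e in F | v \in e] by rewrite He0 set11.
have /andP[e0F ve0] : (e0 \in F) && (v \in e0) by rewrite inE in e0in.
have uniqe : forall e, e \in F -> v \in e -> e = e0.
  move=> e eF ve; have : e \in [set e in F | v \in e] by rewrite inE eF ve.
  by rewrite He0 inE => /eqP.
have [h2 hsub] := HF e0 e0F.
have [u [uv e0E]] : exists u, u != v /\ e0 = [set v; u].
  move/eqP/cards2P: h2 => [x [y [xy E]]].
  move: ve0; rewrite E !inE => /orP[]/eqP->.
    by exists y; split => //; rewrite eq_sym.
  by exists x; split => //; rewrite finset.setUC.
have uS : u \in S by apply: (fintype.subsetP hsub); rewrite e0E !inE eqxx orbT.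
pose S' := S :\ v. pose F' := F :\ e0.
have hS' : #|S'| = k.+1 by move: hS; rewrite (cardsD1 v S) vS add1n => -[].
have hF' : #|F'| = k by move: hF; rewrite (cardsD1 e0 F) e0F add1n => -[].
have HF' : forall e, e \in F' -> #|e| = 2%N /\ e \subset S'.
  move=> e; rewrite !inE => /andP[ne eF]; have [h hs] := HF e eF; split => //.
  apply/fintype.subsetP => x xe; rewrite !inE (fintype.subsetP hs x xe) andbT.
  apply/negP => /eqP xv; subst x; by rewrite (uniqe e eF xe) eqxx in ne.
have Hc' : forall x y, x \in S' -> y \in S' -> connect (erel F') x y.
  move=> x y; rewrite !inE => /andP[xv xS] /andP[yv yS].
  have /connectP[p pp lp] := Hc x y xS yS.
  move: lp; case: (shortenP pp) => p' pp' up' _ lp.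
  have vnot : v \notin x :: p'.
    rewrite inE negb_or eq_sym xv /=; apply/negP => vp.
    move: vp pp' up' lp; case/splitPr => p1 p2.
    case: p2 => [|b p3].
      by rewrite last_cat /= => _ _ E; rewrite E eqxx in yv.
    rewrite cat_path /= => /and4P[_ e1 e2 _] U _.
    have vu : v != u by rewrite eq_sym.
    have E1' : [set last x p1; v] = [set v; u].
      by rewrite -e0E; apply: uniqe e1 _; rewrite !inE eqxx orbT.
    have E2' : [set v; b] = [set v; u].
      by rewrite -e0E; apply: uniqe e2 _; rewrite !inE eqxx.
    have [[a1 a2]|[a1 a2]] := set2_eq vu E1'.
      by rewrite a2 eqxx in uv.
    have [[b1 b2]|[b1 b2]] := set2_eq vu E2'; last first.
      by rewrite b1 eqxx in uv.
    have : uniq ((x :: p1) ++ [:: v, b & p3]) by exact: U.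
    rewrite cat_uniq => /and3P[_ /hasP nh _]; apply: nh; exists b.
      by rewrite !inE eqxx orbT.
    by rewrite b2 -a1 mem_last.
  apply/connectP; exists p' => //.
  apply: (@sub_in_path _ (predC1 v) (erel F)) => //.
    move=> a b av bv /= eab; rewrite /erel !inE andbC; apply/andP; split; first exact: eab.
    apply/negP => /eqP E; have : v \in [set a; b] by rewrite E e0E !inE eqxx.
    move: av bv; rewrite !inE /= => av bv /orP[] /eqP E'.
      by rewrite E' eqxx in av.
    by rewrite E' eqxx in bv.
  apply/allP => z zp /=; apply/negP => /eqP zv; subst z; by rewrite zp in vnot.
have [phi Hphi] := IH S' F' hS' hF' HF' Hc'.
exists (fun t => if t == v then phi u + d u v else phi t) => a b abF.
have vu : v != u by rewrite eq_sym.
case: (eqVneq [set a; b] e0) => [E|ne].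
  rewrite e0E in E; have [[-> ->]|[-> ->]] := set2_eq vu E.
    by rewrite eqxx (negbTE uv) -addrA [d v u]antisym addrN addr0.
  by rewrite eqxx (negbTE uv).
have abF' : [set a; b] \in F' by rewrite !inE ne abF.
have [_ hs] := HF' _ abF'.
have aS : a \in S' by apply: (fintype.subsetP hs); rewrite !inE eqxx.
have bS : b \in S' by apply: (fintype.subsetP hs); rewrite !inE eqxx orbT.
move: aS bS; rewrite !inE => /andP[/negbTE -> _] /andP[/negbTE -> _].
exact: Hphi.
Qed.
End Tree.

Section Geo.
Variable R : realType.

Lemma chord (x y : R) :
  ed (cos (x *+ 2), sin (x *+ 2)) (cos (y *+ 2), sin (y *+ 2)) = 2 * `|sin (x - y)|.
Proof.
rewrite /Defs.edist /=.
have h1 := cos2Dsin2 (x *+ 2); have h2 := cos2Dsin2 (y *+ 2).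
have h3 := cosB (x *+ 2) (y *+ 2).
have h4 := cos_mulr2n (x - y); rewrite mulrnBl in h4.
have h5 := sin2cos2 (x - y).
have -> : (cos (x *+ 2) - cos (y *+ 2)) ^+ 2 + (sin (x *+ 2) - sin (y *+ 2)) ^+ 2
   = (2 * sin (x - y)) ^+ 2.
  rewrite exprMn h5; rewrite h3 in h4; move: h1 h2 h4; nra.
by rewrite sqrtr_sqr normrM ger0_norm.
Qed.

Local Open Scope classical_set_scope.
Local Open Scope ring_scope.
Lemma sin_le_id (x : R) : 0 <= x -> sin x <= x.
Proof.
rewrite le_eqVlt => /orP[/eqP <-|x0]; first by rewrite sin0.
have cs : {within `[0, x], continuous (@sin R)}.
  by apply/continuous_subspaceT => ?; exact: continuous_sin.
have [c _ H] := @MVT R sin cos 0 x x0 (fun c _ => is_derive_sin c) cs.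
move: H; rewrite sin0 !subr0 => ->.
by rewrite -[leRHS]mul1r ler_wpM2r // ?ltW // cos_le1.
Qed.

Lemma jordan (x : R) : 0 <= x <= pi / 2 -> 2 / pi * x <= sin x.
Proof.
move=> /andP[x0 xp].
pose k : R := 2 / pi.
pose h := fun y : R => sin y - k * y.
have dh : forall y : R, is_derive y (1:R) h (cos y - k).
  move=> y; rewrite /h.
  apply: is_deriveB.
  have -> : ( *%R k) = k \*: (@id R) by apply/funext.
  have := @is_deriveZ _ _ _ id k y 1 1 (is_derive_id y 1).
  by rewrite [k *: 1]mulr1.
have hcont : forall a b, {within `[a, b], continuous h}.
  by move=> a b; apply: derivable_within_continuous => z _; apply: ex_derive; exact: dh.
have pi0 := pi_gt0 R.
have hk : k * (pi / 2) = 1 by rewrite /k mulrA divfK ?gt_eqF // divff.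
rewrite -subr_ge0 -[_ - _]/(h x).
have h0 : h 0 = 0 by rewrite /h sin0 mulr0 subr0.
have hpi : h (pi / 2) = 0 by rewrite /h sin_pihalf hk subrr.
move: x0; rewrite le_eqVlt => /orP[/eqP <-|x0]; first by rewrite h0.
move: xp; rewrite le_eqVlt => /orP[/eqP ->|xp]; first by rewrite hpi.
rewrite leNgt; apply/negP => hx.
have [c1 c1i H1] := MVT x0 (fun c _ => dh c) (hcont 0 x).
have [c2 c2i H2] := MVT xp (fun c _ => dh c) (hcont x (pi / 2)).
move: c1i c2i; rewrite !in_itv /= => /andP[c10 c1x] /andP[c2x c2p].
have E1 : cos c1 < k.
  move: H1; rewrite h0 !subr0 => H1.
  have : (cos c1 - k) * x < 0 by rewrite -H1.
  by rewrite pmulr_llt0 // subr_lt0.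
have E2 : k < cos c2.
  move: H2; rewrite hpi => H2.
  have : 0 < (cos c2 - k) * (pi / 2 - x) by rewrite -H2 sub0r oppr_gt0.
  by rewrite pmulr_lgt0 ?subr_gt0.
have : cos c2 < cos c1.
  rewrite ltr_cos ?in_itv /=; last 2 first.
  - by rewrite (ltW c10) /= (le_trans (ltW c1x)) // (le_trans (ltW xp)) // ler_pdivrMr // ler_peMr // ?ltW //; lra.
  - by rewrite (le_trans (ltW x0)) ?(ltW c2x) //= (le_trans (ltW c2p)) // ler_pdivrMr // ler_peMr // ?ltW //; lra.
  exact: lt_trans c1x c2x.
move: E1 E2; lra.
Qed.

Local Close Scope classical_set_scope.
Lemma jordan_abs (t : R) : `|t| <= pi / 2 -> 2 / pi * `|t| <= `|sin t|.
Proof.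
have pi0 := pi_gt0 R.
case: (lerP 0 t) => t0 ht.
  rewrite ger0_norm // in ht *; apply: le_trans (jordan _) (ler_norm _).
  by rewrite t0 ht.
rewrite ltr0_norm // in ht *; apply: le_trans (jordan _) _.
  by rewrite ht oppr_ge0 ltW.
by rewrite sinN -normrN ler_norm.
Qed.


Lemma abs_sinDpi t : `|sin (t + pi)| = `|sin t| :> R.
Proof. by rewrite sinDpi normrN. Qed.

Lemma abs_sinBpi t : `|sin (t - pi)| = `|sin t| :> R.
Proof. by rewrite -abs_sinDpi subrK. Qed.

Variable n : nat.
Hypothesis hn : (1 < n)%N.

Definition ang (k : nat) : R := pi * k%:R / n%:R.
Definition pts (k : 'I_n) : pt R := (cos (ang k *+ 2), sin (ang k *+ 2)).
Definition dstep (a b : 'I_n) : int :=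
  let z := b%:Z - a%:Z in
  if (n%:Z < 2 * z) then z - n%:Z else if (2 * z < - n%:Z) then z + n%:Z else z.

Lemma dstep_spec (a b : 'I_n) :
  ((b%:Z - a%:Z = dstep a b) \/ (b%:Z - a%:Z = dstep a b + n%:Z) \/
   (b%:Z - a%:Z = dstep a b - n%:Z)) /\ (- n%:Z <= 2 * dstep a b <= n%:Z).
Proof.
rewrite /dstep; have := ltn_ord a; have := ltn_ord b.
case: ifP => h1; last case: ifP => h2; lia.
Qed.

Lemma n_gt0 : (0 < n%:R :> R).
Proof. by rewrite ltr0n; lia. Qed.

Lemma chord_pts (a b : 'I_n) : ed (pts a) (pts b) = 2 * `|sin (pi * (dstep a b)%:~R / n%:R)|.
Proof.
rewrite /pts chord; congr (2 * _).
have [hs _] := dstep_spec a b.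
have n0 : n%:R != 0 :> R by rewrite gt_eqF // n_gt0.
have E : forall c : R, (b%:R - a%:R : R) = (dstep a b)%:~R + c * n%:R ->
    ang a - ang b = - (pi * (dstep a b)%:~R / n%:R) - c * pi.
  move=> c H; rewrite /ang.
  have -> : pi * a%:R / n%:R - pi * b%:R / n%:R = - (pi * (b%:R - a%:R) / n%:R) :> R.
    by field.
  rewrite H; field; exact: n0.
have cast : forall z w : int, z = w -> (z%:~R : R) = w%:~R by move=> z w ->.
case: hs => [H|[H|H]]; have := cast _ _ H; rewrite ?intrB ?intrD => H'.
- rewrite (E 0); first by rewrite mul0r subr0 sinN normrN.
  by rewrite mul0r addr0 -H'.
- rewrite (E 1); first by rewrite mul1r abs_sinBpi sinN normrN.
  by rewrite mul1r -H'.
- rewrite (E (-1)); first by rewrite mulN1r opprK abs_sinDpi sinN normrN.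
  by rewrite mulN1r -H'.
Qed.


Lemma dstep_abs (a b : 'I_n) : `|(dstep a b)%:~R| <= n%:R / 2 :> R.
Proof.
have [_ /andP[h1 h2]] := dstep_spec a b.
have h1' : (- n%:R <= 2 * (dstep a b)%:~R :> R).
  by have := h1; rewrite -(ler_int R) intrM intrN.
have h2' : (2 * (dstep a b)%:~R <= n%:R :> R).
  by have := h2; rewrite -(ler_int R) intrM.
rewrite ler_norml; apply/andP; split; lra.
Qed.

Lemma edist_lb (a b : 'I_n) : 4 / n%:R * `|(dstep a b)%:~R| <= ed (pts a) (pts b).
Proof.
rewrite chord_pts.
have pi0 := pi_gt0 R; have n0 := n_gt0.
set t := pi * (dstep a b)%:~R / n%:R.
have ht : `|t| = pi * `|(dstep a b)%:~R| / n%:R.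
  rewrite /t !normrM normfV (ger0_norm (ltW pi0)) (ger0_norm (ltW n0)). done.
have hd := dstep_abs a b.
have := jordan_abs (t := t); rewrite ht.
have -> : 2 / pi * (pi * `|(dstep a b)%:~R| / n%:R) = 2 / n%:R * `|(dstep a b)%:~R| :> R.
  by field; rewrite !gt_eqF ?andbT ?n0 ?pi0 //; lra.
move=> J; have J' := J _.
have : pi * `|(dstep a b)%:~R| / n%:R <= pi / 2 :> R.
  rewrite ler_pdivrMr //; move: hd; set x := `|_|; move=> hd; nra.
move/J => J2.
have -> : 4 / n%:R * `|(dstep a b)%:~R| = 2 * (2 / n%:R * `|(dstep a b)%:~R|) :> R.
  by rewrite !mulrA; congr (_ * _ * _); lra.
by rewrite ler_pM2l.
Qed.


Lemma ordS_val (i : 'I_n) : (ordS i : nat) = (if i.+1 == n then 0 else i.+1)%N.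
Proof.
rewrite /ordS /=; case: eqP => [->|ne]; first by rewrite modnn.
by rewrite modn_small //; have := ltn_ord i; lia.
Qed.

Lemma sinpin_gt0 : 0 < sin (pi / n%:R) :> R.
Proof.
have pi0 := pi_gt0 R; have n0 := n_gt0.
apply: sin_gt0_pi; rewrite divr_gt0 //=.
rewrite ltr_pdivrMr // ltr_pMr //; rewrite ltr1n; lia.
Qed.

Lemma edist_S (i : 'I_n) : ed (pts i) (pts (ordS i)) = 2 * sin (pi / n%:R).
Proof.
rewrite chord_pts; congr (2 * _).
have [hs /andP[h1 h2]] := dstep_spec i (ordS i).
have hv := ordS_val i; have := ltn_ord i.
have : (dstep i (ordS i) = 1) \/ (dstep i (ordS i) = -1).
  move: hs h1 h2; move: (dstep i (ordS i)) => d.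
  case: eqP hv => E ->; lia.
case=> ->; first by rewrite mulr1 ger0_norm // ltW // sinpin_gt0.
by rewrite mulrN1 mulNr sinN normrN ger0_norm // ltW // sinpin_gt0.
Qed.


Lemma edist_xx (x : pt R) : ed x x = 0.
Proof. by rewrite /Defs.edist !subrr expr0n /= addr0 sqrtr0. Qed.

Lemma pts_inj : injective pts.
Proof.
move=> a b E; have := edist_lb a b; rewrite E edist_xx => H.
have n0 := n_gt0.
have : `|(dstep a b)%:~R| = 0 :> R.
  apply/eqP; rewrite eq_le normr_ge0 andbT.
  by rewrite -(ler_pM2l (_ : 0 < 4 / n%:R)) ?mulr0 // divr_gt0.
move/eqP; rewrite normr_eq0 intr_eq0 => /eqP d0.
have [hs _] := dstep_spec a b; rewrite d0 in hs.
apply: val_inj => /=; have := ltn_ord a; have := ltn_ord b; lia.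
Qed.

Lemma sq_conv (lam x : 'I_n -> R) : (forall j, 0 <= lam j) -> \sum_j lam j = 1 ->
  (\sum_j lam j * x j) ^+ 2 <= \sum_j lam j * x j ^+ 2.
Proof.
move=> l0 l1; set m := \sum_j lam j * x j.
have : 0 <= \sum_j lam j * (x j - m) ^+ 2.
  by apply: sumr_ge0 => j _; rewrite mulr_ge0 // sqr_ge0.
rewrite (eq_bigr (fun j => lam j * x j ^+ 2 - (m *+ 2) * (lam j * x j) + m ^+ 2 * lam j));
  last by move=> j _; ring.
rewrite big_split sumrB /= -!mulr_sumr l1 -/m.
set A := \sum_j _; move=> h; nra.
Qed.

Lemma pts_convex : convex_position pts.
Proof.
move=> i [e [e0 H]].
pose t := e / 2.
have t0 : 0 < t by rewrite divr_gt0.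
pose q : pt R := ((1 + t) * (pts i).1, (1 + t) * (pts i).2).
have hcs : (pts i).1 ^+ 2 + (pts i).2 ^+ 2 = 1 by rewrite /= cos2Dsin2.
have hq : ed q (pts i) < e.
  rewrite /Defs.edist /=.
  have -> : ((1 + t) * cos (ang i *+ 2) - cos (ang i *+ 2)) ^+ 2 +
            ((1 + t) * sin (ang i *+ 2) - sin (ang i *+ 2)) ^+ 2 = t ^+ 2.
    by move: hcs => /= hcs; nra.
  rewrite sqrtr_sqr ger0_norm ?ltW // /t; lra.
have [lam [l0 [l1 qE]]] := H q hq.
have Q1 : q.1 = \sum_j lam j * (pts j).1 by rewrite qE.
have Q2 : q.2 = \sum_j lam j * (pts j).2 by rewrite qE.
have : q.1 ^+ 2 + q.2 ^+ 2 <= 1.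
  rewrite Q1 Q2; apply: le_trans (lerD (sq_conv _ l0 l1) (sq_conv _ l0 l1)) _.
  rewrite -big_split /= le_eqVlt; apply/orP; left; apply/eqP.
  rewrite -l1; apply: eq_bigr => j _; rewrite -mulrDr /= cos2Dsin2 mulr1 //.
have -> : q.1 ^+ 2 + q.2 ^+ 2 = (1 + t) ^+ 2.
  by rewrite /q /= !exprMn -mulrDr; move: hcs => /= ->; rewrite mulr1.
nra.
Qed.


Fixpoint wsum (a : 'I_n) (s : seq 'I_n) : int :=
  if s is b :: t then dstep a b + wsum b t else 0.

Lemma wsum_len a s : 4 / n%:R * `|(wsum a s)%:~R| <= walk_len pts a s.
Proof.
have n0 := n_gt0.
have c0 : 0 <= 4 / n%:R :> R by rewrite divr_ge0 // ltW.
elim: s a => [|b s IH] a /=; first by rewrite normr0 mulr0.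
rewrite intrD; apply: le_trans (_ : 4 / n%:R * (`|(dstep a b)%:~R| + `|(wsum b s)%:~R|) <= _).
  by rewrite ler_wpM2l // ler_normD.
by rewrite mulrDr lerD // edist_lb.
Qed.

Lemma wsum_mod a s : exists K : int, wsum a s = (last a s)%:Z - a%:Z + K * n%:Z.
Proof.
elim: s a => [|b s IH] a /=; first by exists 0; rewrite subrr mul0r addr0.
have [K HK] := IH b; have [hs _] := dstep_spec a b.
rewrite HK; case: hs => [h|[h|h]].
- by exists K; lia.
- by exists (K - 1); lia.
- by exists (K + 1); lia.
Qed.

Lemma wsum_pot (E : {set {set 'I_n}}) (phi : 'I_n -> int) :
  (forall a b, [set a; b] \in E -> phi b = phi a + dstep a b) ->
  forall a s, path (adj E) a s -> wsum a s = phi (last a s) - phi a.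
Proof.
move=> Hp a s; elim: s a => [|b s IH] a /=; first by rewrite subrr.
move=> /andP[ab ps]; rewrite IH // (Hp a b ab); lia.
Qed.

Lemma dstep_antisym a b : dstep b a = - dstep a b.
Proof. rewrite /dstep; case: ifP => h1; last case: ifP => h2; case: ifP => h3;
  try case: ifP => h4; lia.
Qed.


Lemma ordS_neq (i : 'I_n) : i != ordS i.
Proof.
apply/eqP => E; have := congr1 (@nat_of_ord n) E; rewrite ordS_val; have := ltn_ord i.
case: eqP; lia.
Qed.

Lemma dil_bound (E : {set {set 'I_n}}) : is_graph E -> #|E| = (n - 1)%N ->
  (((4 - 4 / n%:R) / (2 * sin (pi / n%:R)))%:E <= dilation pts E)%E.
Proof.
move=> gE cE.
have n0 := n_gt0; have s0 := sinpin_gt0.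
case: (pselect (exists i, forall s, path (adj E) i s -> last i s = ordS i -> wsum i s != 1))
  => [[i Hi]|Hno].
  apply: (le_trans _ (ereal_sup_ubound _)); last first.
    by exists (i, ordS i); [exact: ordS_neq|reflexivity].
  rewrite /= edist_S.
  have dGb : ((4 - 4 / n%:R)%:E <= dG pts E i (ordS i))%E.
    apply: le_ereal_inf_tmp => y [s [ps ls] <-]; rewrite lee_fin.
    apply: le_trans (wsum_len i s).
    have W1 := Hi s ps ls; have [K HK] := wsum_mod i s.
    rewrite ls ordS_val in HK.
    have : (n%:Z - 1 <= wsum i s) \/ (wsum i s <= 1 - n%:Z).
      move/eqP: W1 HK; have := ltn_ord i; move: (wsum i s) => w.
      have : (K <= -1) \/ (K = 0) \/ (K = 1) \/ (2 <= K) by lia.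
      case: (i.+1 == n) /eqP => hi.
        case=> [hK|[->|[->|hK]]] *; try lia; nia.
      case=> [hK|[->|[->|hK]]] *; try lia; nia.
    case=> [h|h].
    - have h' : (n%:R - 1 <= (wsum i s)%:~R :> R).
        by have := h; rewrite -(ler_int R) intrB.
      have : (n%:R - 1 <= `|(wsum i s)%:~R| :> R).
        apply: le_trans h' _; exact: ler_norm.
      move=> hh; have -> : 4 - 4 / n%:R = 4 / n%:R * (n%:R - 1) :> R.
        by field; rewrite gt_eqF.
      by rewrite ler_wpM2l // divr_ge0 // ltW.
    - have h' : ((wsum i s)%:~R <= 1 - n%:R :> R).
        by have := h; rewrite -(ler_int R) intrB.
      have : (n%:R - 1 <= `|(wsum i s)%:~R| :> R).
        rewrite -normrN; apply: le_trans _ (ler_norm _); lra.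
      move=> hh; have -> : 4 - 4 / n%:R = 4 / n%:R * (n%:R - 1) :> R.
        by field; rewrite gt_eqF.
      by rewrite ler_wpM2l // divr_ge0 // ltW.
  rewrite EFinM; apply: lee_wpmul2r => //.
  by rewrite lee_fin invr_ge0 mulr_ge0 // ltW.
exfalso.
have H : forall i, exists s, path (adj E) i s /\ last i s = ordS i /\ wsum i s = 1.
  move=> i; apply: contrapT => Hn; apply: Hno; exists i => s ps ls.
  by apply/eqP => W1; apply: Hn; exists s.
have step : forall i, connect (adj E) i (ordS i).
  by move=> i; have [s [ps [ls _]]] := H i; apply/connectP; exists s.
have sym : symmetric (adj E) by move=> a b; rewrite /adj finset.setUC.
have n0' : (0 < n)%N by lia.
pose o : 'I_n := Ordinal n0'.
have c0 : forall j (hj : (j < n)%N), connect (adj E) o (Ordinal hj).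
  elim=> [|j IH] hj; first by rewrite (_ : Ordinal hj = o) ?connect0 //; apply: val_inj.
  apply: connect_trans (IH (ltnW hj)) _.
  rewrite (_ : Ordinal hj = ordS (Ordinal (ltnW hj))); first exact: step.
  by apply: val_inj => /=; rewrite modn_small.
have conn : forall x y, connect (adj E) x y.
  move=> x y.
  have hy : connect (adj E) o y.
    by rewrite (_ : y = Ordinal (ltn_ord y)); [exact: c0|exact: val_inj].
  have hx : connect (adj E) x o.
    rewrite (sym_connect_sym sym).
    by rewrite (_ : x = Ordinal (ltn_ord x)); [exact: c0|exact: val_inj].
  exact: connect_trans hx hy.
have hS : #|[set: 'I_n]| = n.-1.+1 by rewrite cardsT card_ord; lia.
have hE : #|E| = n.-1 by rewrite cE; lia.
have hF : forall e, e \in E -> #|e| = 2%N /\ e \subset [set: 'I_n].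
  by move=> e eE; split; [exact: gE|exact: finset.subsetT].
have [phi Hphi] := @tree_potential _ dstep dstep_antisym n.-1 [set: 'I_n] E hS hE hF
  (fun x y _ _ => conn x y).
have Hs : forall i, phi (ordS i) = phi i + 1.
  move=> i; have [s [ps [ls W]]] := H i.
  have := wsum_pot Hphi ps; rewrite W ls; lia.
have : \sum_i phi (ordS i) = \sum_i phi i + n%:Z.
  by rewrite (eq_bigr (fun i => phi i + 1)) // big_split /= sumr_const card_ord natz.
have -> : \sum_i phi (ordS i) = \sum_i phi i.
  by symmetry; exact: (reindex_inj (@ordS_inj n)).
lia.
Qed.

End Geo.


Theorem corollary1 (R : realType) (n : nat) (hn : (1 < n)%N) :
  (((4 - 2 * sin (pi / n%:R)) / (2 * sin (pi / n%:R)))%:E <= deltaC R n 0)%E /\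
  2 * n%:R / pi - 1 <= (4 - 2 * sin (pi / n%:R)) / (2 * sin (pi / n%:R)) :> R.
Proof.
have n0 : 0 < n%:R :> R by rewrite ltr0n; lia.
have n2 : 2 <= n%:R :> R by rewrite ler_nat.
have pi0 := pi_gt0 R.
have s0 := sinpin_gt0 R hn.
set s := sin (pi / n%:R) in s0 *.
have hpn : pi / n%:R <= pi / 2 :> R.
  by rewrite ler_pdivrMr // mulrAC ler_pdivlMr // ler_pM2l.
split.
  have J := jordan (x := pi / n%:R); rewrite -/s in J.
  have J' : 2 / n%:R <= s.
    have <- : 2 / pi * (pi / n%:R) = 2 / n%:R :> R.
      by field; rewrite !gt_eqF ?andbT // ?pi0 ?n0; lra.
    by apply: J; rewrite hpn andbT divr_ge0 // ltW.
  apply: (@le_trans _ _ (((4 - 4 / n%:R) / (2 * s))%:E)).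
    rewrite lee_fin ler_pM2r ?invr_gt0 ?mulr_gt0 //.
    lra.
  have HD : (((4 - 4 / n%:R) / (2 * s))%:E <= Delta (@pts R n) 0)%E.
    apply: le_ereal_inf_tmp => y [E [gE cE] <-].
    by apply: dil_bound => //; rewrite cE addn0.
  apply: (le_trans HD).
  apply: ereal_sup_ubound; exists (@pts R n) => //; split.
    exact: pts_inj.
  exact: pts_convex.
have hs : s <= pi / n%:R by apply: sin_le_id; rewrite divr_ge0 // ltW.
have -> : (4 - 2 * s) / (2 * s) = 2 / s - 1 by field; rewrite gt_eqF.
suff : 2 * n%:R / pi <= 2 / s by lra.
rewrite ler_pdivrMr // mulrAC ler_pdivlMr //.
have : s * n%:R <= pi by rewrite -ler_pdivlMr.
nra.
Qed.
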